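(* Let $\{X_n\}_{n\in\mathbb{N}}$ be a family of real Banach spaces, $Z_0=\bigoplus^{c_0}_{n\in\mathbb{N}}X_n$, and let $A$ be a separable subset of $Z_0$. Let $Y$ be a real Banach space and $\Delta:S_{Z_0}\to S_Y$ a surjective isometry. Then there exist separable subspaces $M_n\subseteq X_n$ ($n\in\mathbb{N}$) and $N\subseteq Y$ such that $A\subseteq\bigoplus^{c_0}_{n\in\mathbb{N}}M_n$ and $\Delta\big(S_{\bigoplus^{c_0}_{n\in\mathbb{N}}M_n}\big)=S_N$.
   Context: $\bigoplus^{c_0}_{n\in\mathbb{N}}X_n$ is the space of sequences $(x_n)$ with $x_n\in X_n$ and $\|x_n\|\to 0$, with the sup norm; $S_E$ denotes the unit sphere of a normed space $E$. *)

(* Defs.v *)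
From HB Require Import structures.
From mathcomp Require Import all_boot all_order all_algebra.
From mathcomp Require Import all_classical all_reals all_analysis.
Set Implicit Arguments. Unset Strict Implicit. Unset Printing Implicit Defensive.
Import Order.TTheory GRing.Theory Num.Theory.
Import numFieldNormedType.Exports.
Local Open Scope classical_set_scope.
Local Open Scope ring_scope.

Section Defs.
Variable R : realType.

Definition is_subspace (V : normedModType R) (M : set V) : Prop :=
  M 0 /\ (forall (a : R) (x y : V), M x -> M y -> M (a *: x + y)) /\ closed M.

Definition separable_in (V : normedModType R) (S : set V) : Prop :=
  exists D : set V, countable D /\ D `<=` S /\
    forall x, S x -> forall e : R, 0 < e -> exists2 d, D d & `|x - d| < e.

Definition sphere_of (V : normedModType R) (N : set V) : set V :=
  [set y | N y /\ `|y| = 1].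

Definition in_c0 (X : nat -> normedModType R) (x : forall n, X n) : Prop :=
  (fun n => `|x n|) @ \oo --> (0 : R).

Definition c0norm (X : nat -> normedModType R) (x : forall n, X n) : R :=
  sup (range (fun n => `|x n|)).

Definition c0sub (X : nat -> normedModType R) (x y : forall n, X n) : forall n, X n :=
  fun n => x n - y n.

Definition c0sum_of (X : nat -> normedModType R) (M : forall n, set (X n))
  : set (forall n, X n) :=
  [set x | in_c0 x /\ forall n, M n (x n)].

Definition c0sphere_of (X : nat -> normedModType R) (M : forall n, set (X n))
  : set (forall n, X n) :=
  [set x | c0sum_of M x /\ c0norm x = 1].

Definition c0separable (X : nat -> normedModType R) (A : set (forall n, X n)) : Prop :=
  exists D : set (forall n, X n), countable D /\ D `<=` A /\
    forall x, A x -> forall e : R, 0 < e -> exists2 d, D d & c0norm (c0sub x d) < e.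

End Defs.

(* Main.v *)
Require Import Defs.
From HB Require Import structures.
From mathcomp Require Import all_boot all_order all_algebra.
From mathcomp Require Import all_classical all_reals all_analysis.
From mathcomp Require Import ring lra.
Import Order.TTheory GRing.Theory Num.Theory.
Import numFieldNormedType.Exports.
Local Open Scope classical_set_scope.
Local Open Scope ring_scope.
Section Gen.
Context {R : realType} {V : normedModType R}.

Lemma closedP (M : set V) x : closed M ->
  (forall e : R, 0 < e -> exists2 m, M m & `|x - m| < e) -> M x.
Proof.
move=> cM H; apply: cM => B /nbhs_ballP [e /= e0 hB].
have [m Mm hm] := H e e0; exists m; split => //; apply: hB.
by rewrite -ball_normE /=.
Qed.

Lemma closureP' (A : set V) x : closure A x ->
  forall e : R, 0 < e -> exists2 a, A a & `|x - a| < e.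
Proof.
move=> cl e e0; have [a [Aa ha]] := cl _ (nbhsx_ballx x e e0).
by exists a => //; move: ha; rewrite -ball_normE.
Qed.
Arguments closureP' {A x}.

Variables (I : countType) (g : I -> V).

Definition cspan : set V :=
  [set x | forall M, is_subspace M -> (forall i, M (g i)) -> M x].

Definition qcomb (s : seq (rat * I)) : V := \sum_(p <- s) ratr p.1 *: g p.2.

Lemma cspan_sub : is_subspace cspan.
Proof.
split; first by move=> M [h0 _].
split; first by move=> a x y hx hy M hM hg; have [_ [hc _]] := hM; apply: hc; [apply: hx|apply: hy].
move=> x cx M hM hg; have [_ [_ cM]] := hM; apply: cM.
apply: (closureS _ cx) => y hy; exact: hy.
Qed.

Lemma cspan_gen i : cspan (g i).
Proof. by move=> M _ hg. Qed.

Lemma qcomb_in s : cspan (qcomb s).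
Proof.
have [h0 [hc _]] := cspan_sub.
elim: s => [|p s IH]; first by rewrite /qcomb big_nil.
by rewrite /qcomb big_cons; apply: hc => //; apply: cspan_gen.
Qed.

Lemma qcomb_cat s1 s2 : qcomb (s1 ++ s2) = qcomb s1 + qcomb s2.
Proof. by rewrite /qcomb big_cat. Qed.

Lemma qcomb_scale q s :
  qcomb (map (fun p => (q * p.1, p.2)%R) s) = ratr q *: qcomb s.
Proof.
rewrite /qcomb big_map scaler_sumr; apply: eq_bigr => p _.
by rewrite rmorphM scalerA.
Qed.

Definition approxT : set V :=
  [set x | forall e : R, 0 < e -> exists s, `|x - qcomb s| < e].

Lemma approxT_sub : is_subspace approxT.
Proof.
split; first by move=> e e0; exists [::]; rewrite /qcomb big_nil subr0 normr0.
split; last first.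
  move=> x cx e e0.
  have e20 : 0 < e / 2 by rewrite divr_gt0.
  have [t Tt ht] := closureP' cx _ e20.
  have [s hs] := Tt _ e20; exists s.
  rewrite (_ : x - qcomb s = (x - t) + (t - qcomb s)); last by rewrite addrA subrK.
  apply: (le_lt_trans (ler_normD _ _)).
  by rewrite (splitr e) ltrD.
move=> a x y hx hy e e0.
set B := `|x| + 1.
have B0 : 0 < B by rewrite /B ltr_wpDl.
have e30 : 0 < e / 3 by rewrite divr_gt0.
have eB0 : 0 < e / 3 / B by rewrite divr_gt0.
have hlt : a - e / 3 / B < a + e / 3 / B by rewrite ltrBlDr -addrA ltrDl addr_gt0.
have [q hq] := rat_in_itvoo hlt.
have hq' : `|a - ratr q| < e / 3 / B.
  move: hq; rewrite in_itv /= => /andP [h1 h2]; rewrite ltr_norml; apply/andP; split.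
    by rewrite ltrBrDl addrC -ltrBrDl opprK.
  by rewrite ltrBlDr addrC -ltrBlDr.
set C := `|(ratr q : R)| + 1.
have C0 : 0 < C by rewrite /C ltr_wpDl.
have eC0 : 0 < e / 3 / C by rewrite divr_gt0.
have [s1 hs1] := hx _ eC0.
have [s2 hs2] := hy _ e30.
exists (map (fun p => (q * p.1, p.2)%R) s1 ++ s2).
rewrite qcomb_cat qcomb_scale.
rewrite (_ : a *: x + y - (ratr q *: qcomb s1 + qcomb s2) =
   (a - ratr q) *: x + (ratr q *: (x - qcomb s1) + (y - qcomb s2))); last first.
  by rewrite scalerBl scalerBr opprD !addrA subrK; congr (_ - _); rewrite addrAC.
apply: (le_lt_trans (ler_normD _ _)).
rewrite (_ : e = e / 3 + (e / 3 + e / 3)); last first.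
  by rewrite -!mulrDl -mulr_natr; field.
apply: ltr_leD.
  rewrite normrZ; apply: (le_lt_trans (y := `|a - ratr q| * B)).
    by rewrite ler_wpM2l // /B lerDl.
  by rewrite -ltr_pdivlMr.
apply: (le_trans (ler_normD _ _)); apply: lerD; last exact: ltW.
rewrite normrZ; apply: (le_trans (y := C * `|x - qcomb s1|)).
  by rewrite ler_wpM2r // /C lerDl.
by rewrite mulrC -ler_pdivlMr // ltW.
Qed.

Lemma cspan_approx x : cspan x ->
  forall e : R, 0 < e -> exists s, `|x - qcomb s| < e.
Proof.
move=> cx; apply: (cx approxT approxT_sub) => i e e0.
exists [:: (1%R, i)]; rewrite /qcomb big_cons big_nil /= rmorph1 scale1r addr0.
by rewrite subrr normr0.
Qed.

Lemma cspan_sep : separable_in cspan.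
Proof.
exists (range qcomb); split.
  apply: (sub_countable (card_image_le qcomb setT)); exact: countableP.
split; first by move=> _ [s _ <-]; apply: qcomb_in.
move=> x cx e e0; have [s hs] := cspan_approx _ cx _ e0.
by exists (qcomb s) => //; exists s.
Qed.

End Gen.
Arguments cspan {R V I} g.
Arguments qcomb {R V I} g s.
Arguments cspan_sub {R V I} g.
Arguments cspan_gen {R V I} g i.
Arguments cspan_approx {R V I} g x.
Arguments cspan_sep {R V I} g.
Section C0.
Context {R : realType} {X : nat -> normedModType R}.
Implicit Types x y : forall n, X n.

Lemma in_c0P x : in_c0 x <->
  forall e : R, 0 < e -> exists K, forall n, (K <= n)%N -> `|x n| < e.
Proof.
split.
  move=> /cvgrPdist_lt h e e0; have [K _ hK] := h e e0; exists K => n hn.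
  by have := hK n hn; rewrite /= sub0r normrN normr_id.
move=> H; apply/cvgrPdist_lt => e e0; have [K hK] := H e e0.
exists K => // n hn /=; rewrite sub0r normrN normr_id; exact: hK.
Qed.

Lemma c0_bounded x : in_c0 x -> exists B : R, forall n, `|x n| <= B.
Proof.
move=> /in_c0P /(_ 1 ltr01) [K hK].
suff [B hB] : exists B : R, forall n, (n < K)%N -> `|x n| <= B.
  exists (Num.max B 1) => n; case: (ltnP n K) => hn.
    by rewrite le_max hB.
  by rewrite le_max (ltW (hK n hn)) orbT.
elim: K {hK} => [|K [B hB]]; first by exists 0.
exists (Num.max B `|x K|) => n; rewrite ltnS leq_eqVlt => /orP [/eqP ->|hn].
  by rewrite le_max lexx orbT.
by rewrite le_max hB.
Qed.

Lemma has_sup_rg x : in_c0 x -> has_sup (range (fun n => `|x n|)).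
Proof.
move=> /c0_bounded [B hB]; split; first by exists `|x 0%N|, 0%N.
by exists B => _ [n _ <-].
Qed.

Lemma c0bound x n : in_c0 x -> `|x n| <= c0norm x.
Proof. by move=> /has_sup_rg /sup_upper_bound; apply; exists n. Qed.

Lemma c0norm_le x (r : R) : (forall n, `|x n| <= r) -> c0norm x <= r.
Proof.
move=> H; apply: ge_sup; first by exists `|x 0%N|, 0%N.
by move=> _ [n _ <-].
Qed.

Lemma c0norm_near x (e : R) : in_c0 x -> 0 < e ->
  exists n, c0norm x - e < `|x n|.
Proof.
move=> /has_sup_rg hs e0; have [_ [n _ <-] h] := sup_adherent e0 hs.
by exists n.
Qed.

Lemma c0norm_ge0 x : in_c0 x -> 0 <= c0norm x.
Proof. move=> h; have := c0bound _ 0%N h; apply: le_trans. by []. Qed.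

Lemma in_c0_lin (a : R) x y : in_c0 x -> in_c0 y ->
  in_c0 (fun n => a *: x n + y n).
Proof.
move=> /in_c0P hx /in_c0P hy; apply/in_c0P => e e0.
have e20 : 0 < e / 2 by rewrite divr_gt0.
have eA0 : 0 < e / 2 / (`|a| + 1) by rewrite divr_gt0 // ltr_wpDl.
have [K1 h1] := hx _ eA0; have [K2 h2] := hy _ e20.
exists (maxn K1 K2) => n; rewrite geq_max => /andP [n1 n2].
apply: (le_lt_trans (ler_normD _ _)); rewrite (splitr e) ltr_leD //; last first.
  exact: ltW (h2 n n2).
rewrite normrZ; apply: (le_lt_trans (y := (`|a| + 1) * `|x n|)).
  by rewrite ler_wpM2r // lerDl.
by rewrite mulrC -ltr_pdivlMr ?ltr_wpDl // h1.
Qed.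

Lemma in_c0_sub x y : in_c0 x -> in_c0 y -> in_c0 (c0sub x y).
Proof.
move=> hx hy; have := in_c0_lin (-1) _ _ hy hx.
rewrite /in_c0 /c0sub. 
by under eq_fun do rewrite scaleN1r addrC.
Qed.

Lemma in_c0_scale (a : R) x : in_c0 x -> in_c0 (fun n => a *: x n).
Proof.
move=> hx; have h0 : in_c0 (fun n => (0 : X n)).
  by apply/in_c0P => e e0; exists 0%N => n _; rewrite normr0.
have := in_c0_lin a _ _ hx h0; rewrite /in_c0.
by under eq_fun do rewrite addr0.
Qed.

Lemma in_c0_fin x K : (forall n, (K <= n)%N -> x n = 0) -> in_c0 x.
Proof.
by move=> H; apply/in_c0P => e e0; exists K => n hn; rewrite H // normr0.
Qed.

Lemma c0sub_bound x y n : in_c0 x -> in_c0 y ->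
  `|x n - y n| <= c0norm (c0sub x y).
Proof. move=> hx hy; have := c0bound _ n (in_c0_sub _ _ hx hy); by []. Qed.

End C0.
Lemma exists_bound (T : Type) (f : T -> nat) (s : seq T) :
  exists k, all (fun z => (f z <= k)%N) s.
Proof.
elim: s => [|z s [k hk]]; first by exists 0%N.
exists (maxn (f z) k) => /=; rewrite leq_maxl /=.
by apply: sub_all hk => w /= h; rewrite (leq_trans h) // leq_maxr.
Qed.

Section Main.
Context {R : realType} {X : nat -> normedModType R} {Y : normedModType R}.
Variable Delta : (forall n, X n) -> Y.
Local Notation Z := (forall n, X n).
Definition Sph (x : Z) := c0sphere_of (fun n => @setT (X n)) x.
Hypothesis hmaps : forall x, Sph x -> `|Delta x| = 1.
Hypothesis hsurj : forall y : Y, `|y| = 1 -> exists2 x, Sph x & Delta x = y.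
Hypothesis hiso : forall x y, Sph x -> Sph y ->
     `|Delta x - Delta y| = c0norm (c0sub x y).
Variable dA : nat -> Z.

Definition z0 : Z := fun n => 0.

Definition Dinv (y : Y) : Z :=
  match pselect (exists x, Sph x /\ Delta x = y) with
  | left h => projT1 (cid h)
  | right _ => z0
  end.

Lemma DinvP y : `|y| = 1 -> Sph (Dinv y) /\ Delta (Dinv y) = y.
Proof.
move=> hy; rewrite /Dinv; case: pselect => [h|h]; first exact: projT2 (cid h).
by exfalso; have [x hx hd] := hsurj _ hy; apply: h; exists x.
Qed.

Definition gYp (p : nat * nat -> Z) (ji : nat * nat) : Y :=
  if `[< Sph (p ji) >] then Delta (p ji) else 0.

Definition op1 (p : nat * nat -> Z) (s : seq (rat * (nat * nat))) : Z :=
  let w := qcomb (gYp p) s in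
  if w == 0 then z0 else Dinv (`|w|^-1 *: w).

Definition vt (p : nat * nat -> Z) (t : seq (rat * nat * (nat * nat))) : Z :=
  fun m => \sum_(z <- t | z.1.2 == m) ratr z.1.1 *: p z.2 m.

Definition op2 (p : nat * nat -> Z) t : Z :=
  fun m => (c0norm (vt p t))^-1 *: vt p t m.

Definition newstage (p : nat * nat -> Z) (m : nat) : Z :=
  match @unpickle (seq (rat * (nat * nat)) + seq (rat * nat * (nat * nat)))%type m with
  | Some (inl s) => op1 p s
  | Some (inr t) => op2 p t
  | None => z0
  end.

Fixpoint hist (k : nat) : nat -> nat -> Z :=
  match k with
  | 0%N => fun _ i => dA i
  | k'.+1 => fun j i => if (j <= k')%N then hist k' j i
      else newstage (fun ji => if (ji.1 <= k')%N then hist k' ji.1 ji.2 else z0) i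
  end.

Definition P (ji : nat * nat) : Z := hist ji.1 ji.1 ji.2.

Definition restr k (ji : nat * nat) : Z := if (ji.1 <= k)%N then P ji else z0.

Lemma hist_stable k j i : (j <= k)%N -> hist k j i = hist j j i.
Proof.
elim: k => [|k IH]; first by rewrite leqn0 => /eqP ->.
rewrite leq_eqVlt => /orP [/eqP ->|]; first by [].
by rewrite ltnS /= => h; rewrite h IH.
Qed.

Lemma P0 i : P (0%N, i) = dA i.
Proof. by []. Qed.

Lemma P_succ k i : P (k.+1, i) = newstage (restr k) i.
Proof.
rewrite /P /= ltnn; congr newstage; apply: funext => -[j l] /=.
rewrite /restr /=; case: ifP => // h; by rewrite hist_stable.
Qed.

Lemma restr_eq k (ji : nat * nat) : (ji.1 <= k)%N -> restr k ji = P ji.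
Proof. by rewrite /restr => ->. Qed.

Lemma op1_in s : exists ji, P ji = op1 P s.
Proof.
have [k hk] := @exists_bound _ (fun z : (rat * (nat * nat))%type => z.2.1) s.
exists (k.+1, pickle (inl s : (seq (rat * (nat * nat)) + seq (rat * nat * (nat * nat)))%type)).
rewrite P_succ /newstage pickleK /op1.
have -> : qcomb (gYp (restr k)) s = qcomb (gYp P) s.
  rewrite /qcomb; apply: eq_big_seq => z zs.
  by rewrite /gYp restr_eq //; move/allP: hk => /(_ z zs).
by [].
Qed.

Lemma op2_in t : exists ji, P ji = op2 P t.
Proof.
have [k hk] := @exists_bound _ (fun z : (rat * nat * (nat * nat))%type => z.2.1) t.
exists (k.+1, pickle (inr t : (seq (rat * (nat * nat)) + seq (rat * nat * (nat * nat)))%type)).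
rewrite P_succ /newstage pickleK /op2.
have -> : vt (restr k) t = vt P t.
  apply: functional_extensionality_dep => m; rewrite /vt big_seq_cond [RHS]big_seq_cond.
  apply: eq_bigr => z /andP [zs _].
  by rewrite restr_eq //; move/allP: hk => /(_ z zs).
by [].
Qed.


Definition MM n : set (X n) := cspan (fun ji : nat * nat => P ji n).
Definition NN : set Y := cspan (gYp P).

Lemma gYp_S ji : Sph (P ji) -> gYp P ji = Delta (P ji).
Proof. by move=> h; rewrite /gYp asboolT. Qed.

Lemma D2 y e : NN y -> `|y| = 1 -> 0 < e ->
  exists ji, Sph (P ji) /\ `|y - Delta (P ji)| < e.
Proof.
move=> Ny hy e0.
set d := Num.min (e / 2) (1 / 2).
have d0 : 0 < d by rewrite lt_min !divr_gt0.
have d1 : d <= e / 2 by rewrite ge_min lexx.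
have d2 : d <= 1 / 2 by rewrite ge_min lexx orbT.
have [s hs] := cspan_approx (gYp P) y Ny d d0.
move: hs; set w := qcomb (gYp P) s => hs.
have w0 : w != 0.
  apply/negP => /eqP w0; move: hs; rewrite w0 subr0 hy => h1; lra.
have [ji hji] := op1_in s.
have hop : op1 P s = Dinv (`|w|^-1 *: w) by rewrite /op1 -/w (negbTE w0).
have [hS hD] := DinvP _ (normfZV w0).
exists ji; rewrite hji hop; split => //; rewrite hD.
have wp : 0 < `|w| by rewrite normr_gt0.
have h2 : `|w - `|w|^-1 *: w| <= `|y - w|.
  rewrite -{1}(scale1r w) -scalerBl normrZ.
  rewrite (_ : `|1 - `|w|^-1| * `|w| = `| `|w| - 1|); last first.
    by rewrite -{2}(ger0_norm (ltW wp)) -normrM mulrBl mul1r mulVf ?gt_eqF.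
  by rewrite -hy (distrC y w); exact: ler_dist_dist.
apply: (le_lt_trans (ler_distD w _ _)); lra.
Qed.

Lemma build x d : (forall n, MM n (x n)) -> 0 < d -> forall K, exists t,
  (forall m, (m < K)%N -> `|x m - vt P t m| < d) /\
  (forall m, (K <= m)%N -> vt P t m = 0).
Proof.
move=> hM d0; elim=> [|K [t [h1 h2]]].
  by exists [::]; split => // m _; rewrite /vt big_nil.
have [s hs] := cspan_approx _ (x K) (hM K) d d0.
exists (t ++ map (fun z : (rat * (nat * nat))%type => (z.1, K, z.2)) s).
have hv : forall m, vt P (t ++ map (fun z : (rat * (nat * nat))%type => (z.1, K, z.2)) s) m =
    vt P t m + (if K == m then qcomb (fun ji => P ji m) s else 0).
  move=> m; rewrite /vt big_cat /= big_map /=; congr (_ + _).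
  case: eqP => [<-|hne]; first by [].
  by rewrite big_pred0.
split=> m hm; rewrite hv.
  case: (ltnP m K) => hmK.
    by rewrite (gtn_eqF hmK) addr0; exact: h1.
  have -> : m = K by apply/eqP; rewrite eqn_leq hmK -ltnS hm.
  by rewrite eqxx h2 // add0r.
by rewrite h2 ?(ltnW hm) // (ltn_eqF hm) addr0.
Qed.

Lemma D1 x e : c0sphere_of MM x -> 0 < e ->
  exists ji, Sph (P ji) /\ c0norm (c0sub x (P ji)) < e.
Proof.
move=> [[xc0 hM] hx1] e0.
set d := Num.min (e / 4) (1 / 4).
have d0 : 0 < d by rewrite lt_min !divr_gt0.
have d1 : d <= e / 4 by rewrite ge_min lexx.
have d2 : d <= 1 / 4 by rewrite ge_min lexx orbT.
have [K hK] := (in_c0P x).1 xc0 d d0.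
have [t [h1 h2]] := build x d hM d0 K.
set v := vt P t.
have vc0 : in_c0 v := in_c0_fin v K h2.
have hxv : forall m, `|x m - v m| <= d.
  move=> m; case: (ltnP m K) => hm; first exact: ltW (h1 m hm).
  by rewrite /v h2 // subr0; exact: ltW (hK m hm).
have hxb : forall m, `|x m| <= 1 by move=> m; rewrite -hx1; apply: c0bound.
have ev : forall m, x m - (x m - v m) = v m by move=> m; rewrite opprB addrC subrK.
have nvle : c0norm v <= 1 + d.
  apply: c0norm_le => m; rewrite -ev.
  apply: le_trans (ler_normB _ _) _; apply: lerD => //.
have nvge : 1 - 2 * d <= c0norm v.
  have [m hm] := c0norm_near x d xc0 d0; rewrite hx1 in hm.
  have := c0bound v m vc0; have := lerB_dist (x m) (x m - v m); rewrite ev.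
  have := hxv m; lra.
have nv0 : 0 < c0norm v by lra.
set c := op2 P t.
have cc0 : in_c0 c := in_c0_scale _ _ vc0.
have c1 : c0norm c = 1.
  apply/le_anti/andP; split.
    apply: c0norm_le => m; rewrite /c /op2 -/v normrZ ger0_norm; last by rewrite invr_ge0 ltW.
    by rewrite mulrC ler_pdivrMr // mul1r; exact: c0bound.
  rewrite -(ler_pM2l nv0) mulr1.
  apply: c0norm_le => m; have := c0bound c m cc0.
  rewrite /c /op2 -/v normrZ ger0_norm; last by rewrite invr_ge0 ltW.
  move=> h.
  rewrite -[`|v m|]mul1r -(mulfV (lt0r_neq0 nv0)) -mulrA.
  by apply: ler_wpM2l; [exact: ltW | exact: h].
have Sc : Sph c by split => //; split.
have [ji hji] := op2_in t.
exists ji; rewrite hji -/c; split => //.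
have hcv : forall m, `|v m - c m| <= 2 * d.
  move=> m; rewrite /c /op2 -/v -{1}(scale1r (v m)) -scalerBl normrZ.
  apply: (le_trans (y := `|1 - (c0norm v)^-1| * c0norm v)).
    by rewrite ler_wpM2l // c0bound.
  rewrite -{2}(ger0_norm (ltW nv0)) -normrM mulrBl mul1r mulVf ?gt_eqF //.
  by rewrite ler_norml; apply/andP; split; lra.
have : c0norm (c0sub x c) <= 3 * d.
  apply: c0norm_le => m; rewrite /c0sub.
  apply: le_trans (ler_distD (v m) _ _) _.
  have := hxv m; have := hcv m; lra.
lra.
Qed.

Lemma main_eq : Delta @` c0sphere_of MM = sphere_of NN.
Proof.
apply/seteqP; split.
  move=> _ [x hx <-].
  have Sx : Sph x by case: hx => [[h1 _] h2]; split => //; split.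
  split; last exact: hmaps.
  have [_ [_ cN]] := cspan_sub (gYp P).
  apply: closedP cN _ => e e0.
  have [ji [hS hlt]] := D1 x e hx e0.
  exists (Delta (P ji)); first by rewrite -gYp_S //; apply: cspan_gen.
  by rewrite hiso.
move=> y [Ny hy].
have [x Sx hxy] := hsurj _ hy.
exists x => //; split; last by case: Sx.
split; first by case: Sx => [[]].
move=> n; have [_ [_ cM]] := cspan_sub (fun ji : nat * nat => P ji n).
apply: closedP cM _ => e e0.
have [ji [hS hlt]] := D2 _ _ Ny hy e0.
exists (P ji n); first exact: (cspan_gen (fun ji : nat * nat => P ji n)).
have hx0 : in_c0 x by case: Sx => [[]].
have hP0 : in_c0 (P ji) by case: hS => [[]].
apply: le_lt_trans (c0sub_bound x (P ji) n hx0 hP0) _.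
by move: hlt; rewrite -hxy (hiso _ _ Sx hS).
Qed.

End Main.
Lemma enum_countable (T : Type) (t0 : T) (D : set T) : countable D ->
  exists f : nat -> T, D `<=` range f.
Proof.
move=> /countable_injP [f finj].
pose g n := match pselect (exists x, D x /\ f x = n) with
  | left h => projT1 (cid h) | right _ => t0 end.
exists g => x Dx; exists (f x) => //.
rewrite /g; case: pselect => [h|h]; last by exfalso; apply: h; exists x.
have [Dy fy] := projT2 (cid h).
by apply: finj; rewrite ?inE.
Qed.

Theorem lemma3p5 (R : realType) (X : nat -> completeNormedModType R)
  (A : set (forall n, X n))
  (hA0 : A `<=` c0sum_of (fun n => @setT (X n)))
  (hA : c0separable A)
  (Y : completeNormedModType R) (Delta : (forall n, X n) -> Y)
  (hmaps : forall x, c0sphere_of (fun n => @setT (X n)) x -> `|Delta x| = 1)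
  (hsurj : forall y : Y, `|y| = 1 ->
     exists2 x, c0sphere_of (fun n => @setT (X n)) x & Delta x = y)
  (hiso : forall x y, c0sphere_of (fun n => @setT (X n)) x ->
     c0sphere_of (fun n => @setT (X n)) y ->
     `|Delta x - Delta y| = c0norm (c0sub x y)) :
  exists (M : forall n, set (X n)) (N : set Y),
    (forall n, is_subspace (M n) /\ separable_in (M n)) /\
    is_subspace N /\ separable_in N /\
    A `<=` c0sum_of M /\
    Delta @` c0sphere_of M = sphere_of N.
Proof.
move: hA => [D [cD [DA Dd]]].
have [dA hdA] := @enum_countable _ (fun n => (0 : X n)) _ cD.
pose X' := (fun n => X n : normedModType R).
exists (@MM R X' Y Delta dA), (@NN R X' Y Delta dA).
split; first by move=> n; split; [exact: cspan_sub | exact: cspan_sep].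
split; first exact: cspan_sub.
split; first exact: cspan_sep.
split; last exact: (@main_eq R X' Y Delta hmaps hsurj hiso dA).
move=> a Aa; have [ac0 _] := hA0 a Aa; split => // n.
have [_ [_ cM]] := cspan_sub (fun ji : nat * nat => @P R X' Y Delta dA ji n).
apply: closedP cM _ => e e0.
have [d Dd' hd] := Dd a Aa e e0.
have [i _ hi] := hdA d Dd'.
exists (d n).
  rewrite -hi; exact: (cspan_gen (fun ji : nat * nat => @P R X' Y Delta dA ji n) (0%N, i)).
have [dc0 _] := hA0 d (DA d Dd').
exact: le_lt_trans (@c0sub_bound R X' a d n ac0 dc0) hd.
Qed.
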